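(* Let $(\hat x_0,\chi,\lambda_0,\bar\varepsilon)\in \mathrm{dom}\, h\times[0,1)\times\mathbb{R}_{++}\times\mathbb{R}_{++}$ and run the method U-CS$(\hat x_0,\chi,\lambda_0,\bar\varepsilon)$ described in the context. Let $(\mu,\nu)=(\mu(\phi),\mu(h))$ and \[ Q(\bar\varepsilon)=\frac{8M_f^2}{(1-\chi)^2}+\bar\varepsilon\left(\lambda_0^{-1}+\frac{2L_f}{(1-\chi)^2}\right). \] Then U-CS terminates in at most \[ \min\left\{\min\left[\frac{1}{\chi}\left(1+\frac{Q(\bar\varepsilon)}{\mu\bar\varepsilon}\right),\ 1+\frac{Q(\bar\varepsilon)}{\nu\bar\varepsilon}\right]\log\left(1+\frac{\mu d_0^2}{\bar\varepsilon}\right),\ \frac{d_0^2Q(\bar\varepsilon)}{\bar\varepsilon^2}\right\}+\left\lceil 2\log\frac{\lambda_0 Q(\bar\varepsilon)}{\bar\varepsilon}\right\rceil \] iterations.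
   Context: Setting: $f,h:\mathbb{R}^n\to\mathbb{R}\cup\{+\infty\}$ are proper lower semicontinuous convex functions with $\mathrm{dom}\, h\subseteq\mathrm{dom}\, f$, $\phi=f+h$, $\phi_*=\inf_x\phi(x)$. A subgradient oracle $f':\mathrm{dom}\, h\to\mathbb{R}^n$ with $f'(x)\in\partial f(x)$ is available, and there are $M_f,L_f\ge0$ with $\|f'(x)-f'(y)\|\le 2M_f+L_f\|x-y\|$ for all $x,y\in\mathrm{dom}\, h$. The set $X_*$ of minimizers of $\phi$ is nonempty. For $x\in\mathrm{dom}\, h$, $\ell_f(u;x):=f(x)+\langle f'(x),u-x\rangle$. For a proper convex function $\psi$, $\mu(\psi)$ denotes the largest $\mu\ge0$ such that $\psi-\frac{\mu}{2}\|\cdot\|^2$ is convex. $d_0:=\min\{\|x-\hat x_0\|:x\in X_*\}$; $\log$ is the natural logarithm. Method U-CS$(\hat x_0,\chi,\lambda_0,\bar\varepsilon)$: Step 0: set $\lambda=\lambda_0$, $k=1$. Step 1: compute $x=\mathrm{argmin}_{u\in\mathbb{R}^n}\{\ell_f(u;\hat x_{k-1})+h(u)+\frac{1}{2\lambda}\|u-\hat x_{k-1}\|^2\}$; if $\phi(x)-\phi_*\le\bar\varepsilon$, stop. Step 2: if $f(x)-\ell_f(x;\hat x_{k-1})-(1-\chi)\|x-\hat x_{k-1}\|^2/(2\lambda)\le(1-\chi)\bar\varepsilon/2$ does not hold, set $\lambda=\lambda/2$ and go to Step 1; else set $\lambda_k=\lambda$, $\hat x_k=x$, $k\leftarrow k+1$,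 and go to Step 1. Conventions: $1/0=+\infty$; when $\mu=0$ the first entry of the outer minimum is interpreted as $+\infty$ (so the first term of the bound equals $d_0^2Q(\bar\varepsilon)/\bar\varepsilon^2$). *)

(* Defs.v *)
From HB Require Import structures.
From mathcomp Require Import all_boot all_order all_algebra.
From mathcomp Require Import all_classical all_reals.
From mathcomp Require Import ereal exp.
Set Implicit Arguments. Unset Strict Implicit. Unset Printing Implicit Defensive.
Import Order.TTheory GRing.Theory Num.Theory.
Local Open Scope classical_set_scope.
Local Open Scope ring_scope.

Section UCS.
Variables (R : realType) (n : nat).
Local Notation V := 'rV[R]_n.

Definition dotp (u v : V) : R := \sum_(i < n) u ord0 i * v ord0 i.
Definition enorm (u : V) : R := Num.sqrt (dotp u u).

Local Open Scope ereal_scope.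

Definition dom (psi : V -> \bar R) : set V := [set x | psi x < +oo].

Definition proper_fun (psi : V -> \bar R) : Prop :=
  (forall x, -oo < psi x) /\ (exists x, psi x < +oo).

Definition convex_fun (psi : V -> \bar R) : Prop :=
  forall (x y : V) (t : R), (0 < t < 1)%R ->
    psi (t *: x + (1 - t) *: y)%R <= t%:E * psi x + (1 - t)%:E * psi y.

Definition lsc_fun (psi : V -> \bar R) : Prop :=
  forall (x : V) (a : R), a%:E < psi x ->
    exists2 d : R, (0 < d)%R & forall y, (enorm (y - x)%R < d)%R -> a%:E < psi y.

Definition strongly_convex_mod (psi : V -> \bar R) (m : R) : Prop :=
  convex_fun (fun x => psi x - (m / 2 * enorm x ^+ 2)%R%:E).

Definition is_mu (psi : V -> \bar R) (mu : R) : Prop :=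
  (0 <= mu)%R /\ strongly_convex_mod psi mu /\
  (forall m, (0 <= m)%R -> strongly_convex_mod psi m -> (m <= mu)%R).

Definition is_subgrad (f : V -> \bar R) (x g : V) : Prop :=
  forall u, f x + (dotp g (u - x)%R)%:E <= f u.

Definition phi_of (f h : V -> \bar R) : V -> \bar R := fun x => f x + h x.

Definition phistar (phi : V -> \bar R) : \bar R := ereal_inf (range phi).

Definition Xstar (phi : V -> \bar R) : set V :=
  [set x | forall y, phi x <= phi y].

Definition dist0 (phi : V -> \bar R) (x0 : V) : R :=
  inf [set enorm (x - x0)%R | x in Xstar phi].

Definition ell (f : V -> \bar R) (f' : V -> V) (x u : V) : \bar R :=
  f x + (dotp (f' x) (u - x)%R)%:E.

Definition subprob (f h : V -> \bar R) (f' : V -> V) (lam : R) (c u : V) : \bar R :=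
  ell f f' c u + h u + ((2 * lam)^-1 * enorm (u - c)%R ^+ 2)%R%:E.

Definition is_argmin (F : V -> \bar R) (x : V) : Prop := forall u, F x <= F u.

Definition stop_test (phi : V -> \bar R) (eps : R) (x : V) : Prop :=
  phi x - phistar phi <= eps%:E.

Definition accept_test (f : V -> \bar R) (f' : V -> V) (chi eps lam : R)
    (c x : V) : Prop :=
  f x - ell f f' c x - ((1 - chi) * enorm (x - c)%R ^+ 2 / (2 * lam))%R%:E
    <= ((1 - chi) * eps / 2)%R%:E.

(* A run of U-CS(x0, chi, lam0, eps), indexed by the successive executions
   j = 0, 1, 2, ... of Step 1: at execution j, the current stepsize is lam j,
   the current prox center is ctr j, and Step 1 computes xs j. *)
Definition UCS_run (f h : V -> \bar R) (f' : V -> V) (x0 : V) (chi lam0 eps : R)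
    (lam : nat -> R) (ctr xs : nat -> V) : Prop :=
  [/\ lam 0%N = lam0, ctr 0%N = x0,
      (forall j, is_argmin (subprob f h f' (lam j) (ctr j)) (xs j)) &
      (forall j, ~ stop_test (phi_of f h) eps (xs j) ->
         (accept_test f f' chi eps (lam j) (ctr j) (xs j) ->
            lam j.+1 = lam j /\ ctr j.+1 = xs j) /\
         (~ accept_test f f' chi eps (lam j) (ctr j) (xs j) ->
            lam j.+1 = (lam j / 2)%R /\ ctr j.+1 = ctr j))].

Definition Qe (Mf Lf chi lam0 eps : R) : R :=
  (8 * Mf ^+ 2 / (1 - chi) ^+ 2 + eps * (lam0^-1 + 2 * Lf / (1 - chi) ^+ 2))%R.

Definition invE (x : R) : \bar R := if x == 0%R then +oo else (x^-1)%:E.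

Definition ucs_bound (mu nu Q d0 chi lam0 eps : R) : \bar R :=
  let last := ((d0 ^+ 2 * Q / eps ^+ 2)%R)%:E in
  let first :=
    if mu == 0%R then last
    else Order.min
      (Order.min (invE chi * (1 + Q / (mu * eps))%R%:E)
                 (1%E + Q%:E * invE (nu * eps))
        * (ln (1 + mu * d0 ^+ 2 / eps)%R)%:E)
      last in
  first + ((Num.ceil (2 * ln (lam0 * Q / eps)%R)%R)%:~R : R)%:E.

End UCS.

(* Main.v *)
Require Import Defs.
From HB Require Import structures.
From mathcomp Require Import all_boot all_order all_algebra.
From mathcomp Require Import all_classical all_reals.
From mathcomp Require Import ereal exp.
From mathcomp Require Import ring lra.
Import Order.TTheory GRing.Theory Num.Theory.
Local Open Scope classical_set_scope.
Local Open Scope ring_scope.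

Section Vec.
Context {R : realType} {n : nat}.
Local Notation V := 'rV[R]_n.

Lemma dotpC (u v : V) : dotp u v = dotp v u.
Proof. by rewrite /dotp; apply: eq_bigr => i _; rewrite mulrC. Qed.

Lemma dotpDl (u v w : V) : dotp (u + v) w = dotp u w + dotp v w.
Proof. by rewrite /dotp -big_split; apply: eq_bigr => i _; rewrite !mxE mulrDl. Qed.

Lemma dotpZl (a : R) (u w : V) : dotp (a *: u) w = a * dotp u w.
Proof. by rewrite /dotp mulr_sumr; apply: eq_bigr => i _; rewrite !mxE mulrA. Qed.

Lemma dotpNl (u w : V) : dotp (- u) w = - dotp u w.
Proof. by rewrite /dotp -sumrN; apply: eq_bigr => i _; rewrite !mxE mulNr. Qed.

Lemma dotpBl (u v w : V) : dotp (u - v) w = dotp u w - dotp v w.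
Proof. by rewrite dotpDl dotpNl. Qed.

Lemma dotpDr (u v w : V) : dotp w (u + v) = dotp w u + dotp w v.
Proof. by rewrite dotpC dotpDl !(dotpC w). Qed.

Lemma dotpZr (a : R) (u w : V) : dotp w (a *: u) = a * dotp w u.
Proof. by rewrite dotpC dotpZl dotpC. Qed.

Lemma dotpNr (u w : V) : dotp w (- u) = - dotp w u.
Proof. by rewrite dotpC dotpNl dotpC. Qed.

Lemma dotpBr (u v w : V) : dotp w (u - v) = dotp w u - dotp w v.
Proof. by rewrite dotpDr dotpNr. Qed.

Lemma dotpp_ge0 (u : V) : 0 <= dotp u u.
Proof. by rewrite /dotp; apply: sumr_ge0 => i _; rewrite -expr2 sqr_ge0. Qed.

Lemma enorm_ge0 (u : V) : 0 <= enorm u.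
Proof. exact: sqrtr_ge0. Qed.

Lemma enorm_sq (u : V) : enorm u ^+ 2 = dotp u u.
Proof. by rewrite /enorm sqr_sqrtr // dotpp_ge0. Qed.

Lemma dotpp0 (u v : V) : dotp u u = 0 -> dotp u v = 0.
Proof.
move=> H.
have Hi : forall i, u ord0 i = 0.
  move=> i; apply/eqP; rewrite -sqrf_eq0 expr2.
  move: H; rewrite /dotp => /eqP; rewrite psumr_eq0; last by move=> j _; rewrite -expr2 sqr_ge0.
  by move/allP => /(_ i (mem_index_enum _)) /implyP /(_ isT).
by rewrite /dotp big1 // => i _; rewrite Hi mul0r.
Qed.

Lemma CS (u v : V) : dotp u v <= enorm u * enorm v.
Proof.
have key : forall t, 0 < t -> 2 * t * dotp u v <= t ^+ 2 * dotp u u + dotp v v.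
  move=> t t0.
  have := dotpp_ge0 (t *: u - v).
  rewrite !dotpBl !dotpBr !dotpZl !dotpZr (dotpC v u). lra.
have [u0|upos] := eqVneq (dotp u u) 0.
  by rewrite (dotpp0 u v u0) mulr_ge0 // enorm_ge0.
have [v0|vpos] := eqVneq (dotp v v) 0.
  by rewrite dotpC (dotpp0 v u v0) mulr_ge0 // enorm_ge0.
have eu : 0 < enorm u by rewrite sqrtr_gt0 lt_neqAle eq_sym upos dotpp_ge0.
have ev : 0 < enorm v by rewrite sqrtr_gt0 lt_neqAle eq_sym vpos dotpp_ge0.
have := key (enorm v / enorm u) (divr_gt0 ev eu).
rewrite -!enorm_sq.
have : enorm v / enorm u * enorm u = enorm v by rewrite divfK // gt_eqF.
move: (enorm v / enorm u) (divr_gt0 ev eu) => t tp E.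
rewrite -E => H.
have : t * (2 * dotp u v) <= t * (2 * (enorm u * (t * enorm u))) by nra.
rewrite ler_pM2l // ler_pM2l //.
Qed.

Lemma sq_comb (p q : V) (t : R) :
  enorm (t *: p + (1 - t) *: q) ^+ 2 =
  t * enorm p ^+ 2 + (1 - t) * enorm q ^+ 2 - t * (1 - t) * enorm (p - q) ^+ 2.
Proof.
rewrite !enorm_sq !dotpDl !dotpDr !dotpNl !dotpNr !dotpZl !dotpZr (dotpC q p).
ring.
Qed.

Lemma enormZ (a : R) (u : V) : enorm (a *: u) = `|a| * enorm u.
Proof.
rewrite /enorm dotpZl dotpZr mulrA -expr2 sqrtrM ?sqr_ge0 //.
by rewrite sqrtr_sqr.
Qed.

Lemma enormN (u : V) : enorm (- u) = enorm u.
Proof. by rewrite /enorm dotpNl dotpNr opprK. Qed.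

Lemma enormB (u v : V) : enorm (u - v) = enorm (v - u).
Proof. by rewrite -enormN opprB. Qed.

Lemma dotpCS (u v : V) : dotp u v <= enorm u * enorm v.
Proof. exact: CS. Qed.

End Vec.

Section Ext.
Context {R : realType} {n : nat}.
Local Notation V := 'rV[R]_n.
Local Open Scope ereal_scope.

Lemma fin_of {e : \bar R} : -oo < e -> e < +oo -> e = (fine e)%:E.
Proof. by move=> a b; rewrite fineK // fin_numE -ltey -ltNye a b. Qed.

Lemma sc_real (psi : V -> \bar R) (m : R) (x y : V) (t : R) :
  (forall z, -oo < psi z) -> strongly_convex_mod psi m -> (0 < t < 1)%R ->
  psi x < +oo -> psi y < +oo ->
  (psi (t *: x + (1 - t) *: y)%R < +oo) /\
  (fine (psi (t *: x + (1 - t) *: y)%R) <=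
    t * fine (psi x) + (1 - t) * fine (psi y) - m / 2 * (t * (1 - t)) * enorm (x - y) ^+ 2)%R.
Proof.
move=> Hm Hsc ht Hx Hy.
have H := Hsc x y t ht.
rewrite (fin_of (Hm x) Hx) (fin_of (Hm y) Hy) in H.
move: H; set z := (t *: x + (1 - t) *: y)%R.
have := Hm z.
case: (psi z) => [r| |] //= _.
  rewrite -!EFinB -!EFinM -EFinD lee_fin => H; split; first by rewrite ltry.
  have E := sq_comb x y t.
  rewrite -subr_ge0.
  have -> : (t * fine (psi x) + (1 - t) * fine (psi y) - m / 2 * (t * (1 - t)) * enorm (x - y) ^+ 2 - r
      = t * (fine (psi x) - m / 2 * enorm x ^+ 2) + (1 - t) * (fine (psi y) - m / 2 * enorm y ^+ 2)
        - (r - m / 2 * enorm z ^+ 2))%R.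
    rewrite /z E; ring.
  by rewrite subr_ge0.
Qed.

End Ext.


Section Fin.
Context {R : realType}.

Lemma expR_half_le2 : sequences.expR (1 / 2 : R) <= 2.
Proof.
have H := expRxMexpNx_1 (1 / 2 : R).
have H2 := expR_ge1Dx (- (1 / 2) : R).
have p0 : 0 < sequences.expR (1 / 2 : R) by exact: expR_gt0.
have Hn : 1 / 2 <= sequences.expR (- (1 / 2) : R) by lra.
have : sequences.expR (1 / 2 : R) * (1 / 2) <= sequences.expR (1 / 2 : R) * sequences.expR (- (1 / 2)).
  by rewrite ler_pM2l.
rewrite H; lra.
Qed.

Lemma B_bound (B : nat) (y : R) : 2 ^+ B <= y -> B%:R <= 2 * ln y.
Proof.
move=> H.
have y0 : 0 < y by apply: lt_le_trans H; exact: exprn_gt0.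
have : sequences.expR (B%:R * (1 / 2)) <= y.
  rewrite expRM_natl; apply: le_trans H.
  apply: lerXn2r; rewrite ?nnegrE ?expR_ge0 ?ler0n //; exact: expR_half_le2.
move=> HH.
have : ln (sequences.expR (B%:R * (1 / 2))) <= ln y by rewrite ler_ln ?posrE ?expR_gt0.
rewrite expRK; lra.
Qed.

Lemma ln_low (q : R) : 0 < q -> q / (1 + q) <= ln (1 + q).
Proof.
move=> q0.
have H := @le_ln1Dx R (- (q / (1 + q))).
have q1 : 0 < 1 + q by lra.
have : -1 < - (q / (1 + q)).
  rewrite ltrN2 ltr_pdivrMr // mul1r; lra.
move=> /H.
have -> : 1 + - (q / (1 + q)) = (1 + q)^-1 by field; rewrite gt_eqF.
rewrite lnV ?posrE //; lra.
Qed.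

Lemma count_log (A : nat) (q Z : R) : 0 < q -> (1 + q) ^+ A <= Z ->
  A%:R <= (1 + q^-1) * ln Z.
Proof.
move=> q0 H.
have q1 : 0 < 1 + q by lra.
have Z0 : 0 < Z by apply: lt_le_trans H; exact: exprn_gt0.
have H1 : ln ((1 + q) ^+ A) <= ln Z by rewrite ler_ln ?posrE ?exprn_gt0.
rewrite lnXn // in H1.
have H2 := ln_low _ q0.
have H3 : A%:R * (q / (1 + q)) <= ln Z.
  apply: le_trans H1; rewrite -[ln (1 + q) *+ A]mulr_natl; apply: ler_wpM2l => //; exact: ler0n.
have E : A%:R = A%:R * (q / (1 + q)) * ((1 + q^-1)) by field; rewrite ?gt_eqF.
rewrite E [X in _ <= X]mulrC; apply: ler_wpM2r; last exact: H3.
have : 0 < q^-1 by rewrite invr_gt0.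
lra.
Qed.

Lemma A_last (A : nat) (Q d0 eps : R) : 0 < eps -> 0 < Q ->
  A%:R * (eps ^+ 2 / Q) <= d0 ^+ 2 -> A%:R <= d0 ^+ 2 * Q / eps ^+ 2.
Proof.
move=> e0 Q0 H.
have e2 : 0 < eps ^+ 2 / Q by apply: divr_gt0 => //; exact: exprn_gt0.
have -> : d0 ^+ 2 * Q / eps ^+ 2 = d0 ^+ 2 / (eps ^+ 2 / Q).
  by field; rewrite ?gt_eqF ?exprn_gt0.
by rewrite ler_pdivlMr.
Qed.

Lemma final_bound (A B : nat) (mu nu Q d0 chi lam0 eps : R) :
  0 < eps -> 0 < Q -> 0 <= chi < 1 -> 0 <= mu -> 0 <= nu -> 0 <= d0 ->
  A%:R * (eps ^+ 2 / Q) <= d0 ^+ 2 ->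
  (0 < mu -> 0 < nu -> (1 + eps * nu / Q) ^+ A <= 1 + mu * d0 ^+ 2 / eps) ->
  (0 < mu -> 0 < chi -> (1 + eps * (mu * chi) / Q) ^+ A <= 1 + mu * d0 ^+ 2 / eps) ->
  2 ^+ B * (eps / Q) <= lam0 ->
  ((A + B)%:R%:E <= ucs_bound mu nu Q d0 chi lam0 eps)%E.
Proof.
move=> e0 Q0 /andP[c0 c1] m0 n0 d00 H1 H2 H3 H4.
rewrite natrD EFinD /ucs_bound /=; apply: leeD; last first.
  rewrite lee_fin; apply: le_trans (ceil_ge _); apply: B_bound.
  have -> : lam0 * Q / eps = lam0 / (eps / Q) by field; rewrite !gt_eqF.
  by rewrite ler_pdivlMr ?divr_gt0.
have HA := A_last _ _ _ _ e0 Q0 H1.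
case: eqP => [_|/eqP mn0]; first by rewrite lee_fin.
have mp : 0 < mu by rewrite lt_neqAle eq_sym mn0.
rewrite le_min; apply/andP; split; last by rewrite lee_fin.
have [d0z|d0p] := eqVneq d0 0.
  have A0 : A%:R = 0 :> R.
    apply/eqP; rewrite eq_le ler0n andbT; move: HA; rewrite d0z expr0n /= !mul0r //.
  by rewrite A0 d0z expr0n /= mulr0 mul0r addr0 ln1 mule0.
have d0p' : 0 < d0 by rewrite lt_neqAle eq_sym d0p.
set Z := 1 + mu * d0 ^+ 2 / eps.
have Z1 : 1 < Z by rewrite /Z ltrDl; apply: divr_gt0 => //; apply: mulr_gt0 => //; exact: exprn_gt0.
have L0 : 0 < ln Z by exact: ln_gt0.
have hX : ((A%:R)%:E <= invE chi * (1 + Q / (mu * eps))%:E * (ln Z)%:E)%E.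
  rewrite /invE; case: eqP => [_|/eqP cn0].
    rewrite gt0_mulye ?lte_fin; last first.
      have : 0 < Q / (mu * eps) by apply: divr_gt0 => //; exact: mulr_gt0.
      lra.
    by rewrite gt0_mulye ?lte_fin // leey.
  have cp : 0 < chi by rewrite lt_neqAle eq_sym cn0.
  rewrite -!EFinM lee_fin.
  set q := eps * (mu * chi) / Q.
  have q0 : 0 < q by apply: divr_gt0 => //; apply: mulr_gt0 => //; exact: mulr_gt0.
  have HC := count_log _ _ _ q0 (H3 mp cp).
  apply: le_trans HC _; apply: ler_wpM2r; first exact: ltW.
  have -> : q^-1 = chi^-1 * (Q / (mu * eps)) by rewrite /q; field; rewrite !gt_eqF.
  have ci : 1 <= chi^-1 by rewrite invf_ge1 // ltW.
  have : 0 <= Q / (mu * eps) by apply: divr_ge0; [exact: ltW| apply: mulr_ge0; exact: ltW].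
  nra.
have hY : ((A%:R)%:E <= (1%E + Q%:E * invE (nu * eps)) * (ln Z)%:E)%E.
  rewrite /invE; case: eqP => [_|/eqP nn0].
    have e1 : (Q%:E * +oo = +oo :> \bar R)%E by rewrite gt0_muley // lte_fin.
    by rewrite e1 addey // gt0_mulye ?leey // lte_fin.
  have np : 0 < nu.
    rewrite lt_neqAle n0 andbT; apply: contra nn0 => /eqP <-; rewrite mul0r.
    by [].
  rewrite -EFinM lee_fin.
  set q := eps * nu / Q.
  have q0 : 0 < q by apply: divr_gt0 => //; exact: mulr_gt0.
  have HC := count_log _ _ _ q0 (H2 mp np).
  apply: le_trans HC _.
  have -> : q^-1 = Q * (nu * eps)^-1 by rewrite /q; field; rewrite !gt_eqF.
  by [].
rewrite minEle; case: ifP => _.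
  exact: hX.
exact: hY.
Qed.

End Fin.

Section Pot.
Context {R : realType}.
Lemma pot1 (a b w lm e c d : R) (A : nat) :
  lm * e + (1 + w) * b < a -> 0 <= w * b -> c <= lm * e -> a + A%:R * c <= d ->
  b + A.+1%:R * c <= d.
Proof. move=> H1 H2 H3 H4; rewrite mulrSr; lra. Qed.

Lemma pot2 (a b w lm e K q d : R) (A : nat) :
  lm * e + (1 + w) * b < a -> 0 <= b -> 0 <= q -> q <= w -> K * q <= lm * e ->
  (a + K) * (1 + q) ^+ A <= d -> (b + K) * (1 + q) ^+ A.+1 <= d.
Proof.
move=> H1 b0 q0 qw Kq H.
have h1 : q * b <= w * b by apply: ler_wpM2r.
have h2 : (b + K) * (1 + q) <= a + K by lra.
apply: le_trans H; rewrite exprS mulrA; apply: ler_wpM2r => //.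
apply: exprn_ge0; lra.
Qed.
End Pot.
Arguments pot1 {R a b w lm e c d A}.
Arguments pot2 {R a b w lm e K q d A}.


Lemma lim_le {R : realType} (X Y Z : R) : 0 <= Z ->
  (forall t, 0 < t < 1 -> X <= Y + t * Z) -> X <= Y.
Proof.
move=> Z0 H; rewrite leNgt; apply/negP => XY.
have [Z00|Zp] := eqVneq Z 0.
  by have := H (1/2) ltac:(lra); rewrite Z00 mulr0 addr0 leNgt XY.
have Zp' : 0 < Z by rewrite lt_neqAle eq_sym Zp Z0.
pose t := Order.min (1/2) ((X - Y) / (2 * Z)).
have t0 : 0 < t by rewrite lt_min; apply/andP; split; [lra| apply: divr_gt0; lra].
have t1 : t <= (X - Y) / (2 * Z) by rewrite ge_min lexx orbT.
have t2 : t <= 1/2 by rewrite ge_min lexx.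
have := H t ltac:(lra).
have : t * Z <= (X - Y) / (2 * Z) * Z by rewrite ler_pM2r.
have -> : (X - Y) / (2 * Z) * Z = (X - Y) / 2 by field; rewrite Zp.
lra.
Qed.

Lemma conv_sc0 {R : realType} {n : nat} (psi : 'rV[R]_n -> \bar R) :
  convex_fun psi -> strongly_convex_mod psi 0.
Proof.
move=> H x y t ht; rewrite !mul0r !sube0; exact: H.
Qed.

Lemma lim_le_nat {R : realType} (X Y Z : R) : 0 <= Z ->
  (forall N : nat, (0 < N)%N -> X <= Y + Z / N%:R) -> X <= Y.
Proof.
move=> Z0 H; apply: (@lim_le _ X Y Z Z0) => t /andP[t0 t1].
set N := (Num.truncn t^-1).+1.
have HN : t^-1 < N%:R by exact: truncnS_gt.
have N0 : (0 < N)%N by [].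
apply: le_trans (H N N0) _.
rewrite lerD2l mulrC ler_wpM2r //.
rewrite -[t]invrK lef_pV2 ?posrE ?invr_gt0 ?ltr0n //; exact: ltW.
Qed.

Section Main.
Context {R : realType} {n : nat}.
Local Notation V := 'rV[R]_n.
Variables (f h : V -> \bar R) (f' : V -> V) (Mf Lf : R) (chi eps nu : R).
Hypothesis fp : forall x, (-oo < f x)%E.
Hypothesis hp : forall x, (-oo < h x)%E.
Hypothesis fc : convex_fun f.
Hypothesis hc : convex_fun h.
Hypothesis hsc : strongly_convex_mod h nu.
Hypothesis nu0 : 0 <= nu.
Variable mu : R.
Hypothesis phsc : strongly_convex_mod (phi_of f h) mu.
Hypothesis chi01 : 0 <= chi < 1.
Hypothesis eps0 : 0 < eps.
Hypothesis domhf : dom h `<=` dom f.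
Hypothesis sg : forall x, x \in dom h -> is_subgrad f x (f' x).
Hypothesis Mf0 : 0 <= Mf.
Hypothesis Lf0 : 0 <= Lf.
Hypothesis lip : forall x y, x \in dom h -> y \in dom h ->
     enorm (f' x - f' y) <= 2 * Mf + Lf * enorm (x - y).

Definition D := dom h.
Definition Fr x := fine (f x).
Definition Hr x := fine (h x).
Definition Phi x := Fr x + Hr x.
Definition Sr (lm : R) (c u : V) :=
  Fr c + dotp (f' c) (u - c) + Hr u + (2 * lm)^-1 * enorm (u - c) ^+ 2.

Lemma inD x : (x \in D) = (h x < +oo)%E.
Proof. by apply/idP/idP => [/set_mem|H]; [|apply: mem_set]. Qed.

Lemma hE {x} : x \in D -> h x = (Hr x)%:E.
Proof. by rewrite inD => H; rewrite /Hr -fin_of. Qed.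

Lemma fE {x} : x \in D -> f x = (Fr x)%:E.
Proof.
move=> /set_mem /domhf H; rewrite /Fr -fin_of //.
Qed.

Lemma phiE {x} : x \in D -> phi_of f h x = (Phi x)%:E.
Proof. by move=> H; rewrite /phi_of fE // hE // /Phi EFinD. Qed.

Lemma D_conv {x y t} : x \in D -> y \in D -> 0 < t < 1 -> t *: x + (1 - t) *: y \in D.
Proof.
rewrite !inD => Hx Hy ht.
by have [] := sc_real h 0 x y t hp (@conv_sc0 _ _ h hc) ht Hx Hy.
Qed.

Lemma sgr {x u} : x \in D -> u \in D -> Fr x + dotp (f' x) (u - x) <= Fr u.
Proof. by move=> Hx Hu; have := sg x Hx u; rewrite fE // fE // -EFinD lee_fin. Qed.

Lemma subprobE lm {c u} : c \in D -> u \in D -> subprob f h f' lm c u = (Sr lm c u)%:E.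
Proof. by move=> Hc Hu; rewrite /subprob /ell fE // hE // -!EFinD. Qed.

Lemma argmin_D {lm c x} : c \in D -> is_argmin (subprob f h f' lm c) x -> x \in D.
Proof.
move=> Hc H; have := H c; rewrite (subprobE lm Hc Hc) inD.
rewrite /subprob /ell fE //.
have := hp x.
by case: (h x) => [r| |].
Qed.

Lemma vec_comb (u x c : V) (t : R) :
  t *: u + (1 - t) *: x - c = t *: (u - c) + (1 - t) *: (x - c).
Proof. by apply/rowP => i; rewrite !mxE; ring. Qed.

Lemma three_point lm c x u : 0 < lm -> c \in D -> is_argmin (subprob f h f' lm c) x ->
  u \in D -> Sr lm c x + (nu / 2 + (2 * lm)^-1) * enorm (u - x) ^+ 2 <= Sr lm c u.
Proof.
move=> lm0 Hc Hm Hu.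
have Hx := argmin_D Hc Hm.
have il : 0 < (2 * lm)^-1 by rewrite invr_gt0; lra.
apply: (@lim_le _ _ _ ((nu / 2 + (2 * lm)^-1) * enorm (u - x) ^+ 2)).
  by apply: mulr_ge0; [apply: addr_ge0; [apply: divr_ge0 | apply: ltW] | exact: sqr_ge0].
move=> t ht.
have Hz := D_conv Hu Hx ht.
have H1 := Hm (t *: u + (1 - t) *: x).
rewrite (subprobE lm Hc Hx) (subprobE lm Hc Hz) lee_fin in H1.
have [_ H2] := sc_real h nu u x t hp hsc ht (set_mem Hu) (set_mem Hx).
rewrite /Sr vec_comb (dotpDr (t *: (u - c))) !dotpZr sq_comb in H1.
have E3 : (u - c) - (x - c) = u - x by apply/rowP=> i; rewrite !mxE; ring.
rewrite E3 in H1.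
rewrite -subr_ge0 in H1; rewrite -subr_ge0 in H2.
rewrite /Sr -subr_ge0 -(pmulr_rge0 _ (proj1 (andP ht))).
apply: le_trans (addr_ge0 H1 H2) _; rewrite le_eqVlt; apply/orP; left; apply/eqP.
rewrite /Hr; ring.
Qed.

Lemma p_in (x c : V) (t : R) : x \in D -> c \in D -> 0 <= t <= 1 -> t *: x + (1 - t) *: c \in D.
Proof.
move=> Hx Hc /andP[t0 t1].
have [->|tn0] := eqVneq t 0; first by rewrite scale0r add0r subr0 scale1r.
have [->|tn1] := eqVneq t 1; first by rewrite subrr scale0r addr0 scale1r.
apply: D_conv => //; rewrite lt_neqAle eq_sym tn0 t0 /= lt_neqAle tn1 t1 //.
Qed.

Lemma disc_bound (x c : V) : x \in D -> c \in D ->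
  Fr x - Fr c - dotp (f' c) (x - c) <= 2 * Mf * enorm (x - c) + Lf * enorm (x - c) ^+ 2 / 2.
Proof.
move=> Hx Hc.
set r := enorm (x - c).
have r0 : 0 <= r by exact: enorm_ge0.
apply: (@lim_le_nat _ _ _ (Lf * r ^+ 2 / 2)).
  by apply: divr_ge0 => //; apply: mulr_ge0 => //; exact: sqr_ge0.
move=> N N0.
set s := N%:R^-1 : R.
have s0 : 0 < s by rewrite invr_gt0 ltr0n.
have Ns : N%:R * s = 1 by rewrite mulfV // pnatr_eq0 -lt0n.
pose p (k : nat) := (k%:R * s) *: x + (1 - k%:R * s) *: c.
have pD : forall k, (k <= N)%N -> p k \in D.
  move=> k kN; apply: p_in => //; apply/andP; split.
    by apply: mulr_ge0 => //; exact: ltW.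
  by apply: (@le_trans _ _ (N%:R * s)); [rewrite ler_pM2r // ler_nat | rewrite Ns].
have pc : forall k, p k - c = (k%:R * s) *: (x - c).
  by move=> k; apply/rowP => i; rewrite !mxE; ring.
have pS : forall k, p k.+1 - p k = s *: (x - c).
  by move=> k; apply/rowP => i; rewrite !mxE -addn1 natrD; ring.
have key : forall k, (k <= N)%N ->
  Fr (p k) - Fr c - k%:R * s * dotp (f' c) (x - c) <=
    k%:R * s * (2 * Mf * r) + Lf * r ^+ 2 * (k%:R * (k%:R + 1)) * s ^+ 2 / 2.
  elim=> [_|k IH kN].
    have -> : p 0%N = c by rewrite /p mul0r scale0r add0r subr0 scale1r.
    rewrite (_ : (0%:R : R) = 0) //; lra.
  have IH' := IH (ltnW kN).
  have Hk1 := pD _ kN.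
  have Hk := pD _ (ltnW kN).
  have S1 := sgr Hk1 Hk.
  have E1 : p k - p k.+1 = - (s *: (x - c)) by rewrite -(pS k) opprB.
  rewrite E1 dotpNr dotpZr in S1.
  have C1 := dotpCS (f' (p k.+1) - f' c) (x - c).
  have L1 := lip _ _ Hk1 Hc.
  rewrite pc enormZ ger0_norm in L1; last by apply: mulr_ge0 => //; exact: ltW.
  rewrite dotpBl in C1.
  have L2 : enorm (f' (p k.+1) - f' c) * r <= (2 * Mf + Lf * (k.+1%:R * s * r)) * r.
    by apply: ler_wpM2r.
  have eK : (k.+1)%:R = k%:R + 1 :> R by rewrite mulrSr.
  rewrite eK in L2 *.
  rewrite -subr_ge0 in IH'; rewrite -subr_ge0 in S1; rewrite -subr_ge0 in L2;
  rewrite -subr_ge0 in C1.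
  rewrite -subr_ge0.
  have H4 := addr_ge0 (addr_ge0 IH' S1) (mulr_ge0 (ltW s0) (addr_ge0 L2 C1)).
  apply: le_trans H4 _; rewrite le_eqVlt; apply/orP; left; apply/eqP.
  by rewrite -/r; field.
have := key N (leqnn N).
have -> : p N = x.
  by rewrite /p Ns subrr scale0r addr0 scale1r.
rewrite Ns mul1r.
have -> : Lf * r ^+ 2 * (N%:R * (N%:R + 1)) * s ^+ 2 / 2 = Lf * r ^+ 2 / 2 + Lf * r ^+ 2 / 2 * s.
  rewrite /s; field; rewrite pnatr_eq0 -lt0n N0 //.
lra.
Qed.

Lemma accept_ok lm c x : 0 < lm -> c \in D -> x \in D -> 0 <= chi < 1 -> 0 < eps ->
  lm * (8 * Mf ^+ 2 / (1 - chi) ^+ 2 + eps * (2 * Lf / (1 - chi) ^+ 2)) <= 2 * eps ->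
  accept_test f f' chi eps lm c x.
Proof.
move=> lm0 Hc Hx /andP[ch0 ch1] e0 Hl.
rewrite /accept_test /ell fE // fE // -EFinD lee_fin.
have B := disc_bound _ _ Hx Hc.
set r := enorm (x - c) in B *.
have r0 : 0 <= r by exact: enorm_ge0.
set s := 1 - chi in Hl *.
have s0 : 0 < s by rewrite /s; lra.
have s1 : s <= 1 by rewrite /s; lra.
set w := lm^-1.
have w0 : 0 < w by rewrite invr_gt0.
have Hl' : 4 * Mf ^+ 2 + Lf * eps <= eps * s ^+ 2 * w.
  have := ler_pM2r (mulr_gt0 (mulr_gt0 w0 (exprn_gt0 2 s0)) (ltr0n _ 2 : (0 < 2%:R :> R))) .
  move=> /(_ (lm * (8 * Mf ^+ 2 / s ^+ 2 + eps * (2 * Lf / s ^+ 2))) (2 * eps)).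
  rewrite Hl => /esym HH.
  have E1 : lm * (8 * Mf ^+ 2 / s ^+ 2 + eps * (2 * Lf / s ^+ 2)) * (w * s ^+ 2 * 2%:R) = 2 * (2 * (4 * Mf ^+ 2 + Lf * eps)).
    rewrite /w; field; apply/andP; split; rewrite ?gt_eqF //; exact: exprn_gt0.
  have E2 : 2 * eps * (w * s ^+ 2 * 2%:R) = 2 * (2 * (eps * s ^+ 2 * w)) by ring.
  move: HH; rewrite E1 E2; lra.
have h1 : (4 * Mf ^+ 2 + Lf * eps) * r ^+ 2 <= eps * s ^+ 2 * w * r ^+ 2.
  by apply: ler_wpM2r => //; exact: sqr_ge0.
have h2 : 0 <= (2 * Mf * r - s * eps) ^+ 2 by exact: sqr_ge0.
have h3 : Lf * r ^+ 2 * eps * s <= Lf * r ^+ 2 * eps.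
  by rewrite -{2}(mulr1 (Lf * r ^+ 2 * eps)); apply: ler_wpM2l => //; apply: mulr_ge0 => //;
    [apply: mulr_ge0 => //; exact: sqr_ge0| exact: ltW].
have es0 : 0 < 2 * eps * s by apply: mulr_gt0 => //; lra.
rewrite -(ler_pM2l es0).
have -> : 2 * eps * s * (Fr x - (Fr c + dotp (f' c) (x - c)) - s * r ^+ 2 / (2 * lm)) =
          2 * eps * s * (Fr x - Fr c - dotp (f' c) (x - c)) - eps * s ^+ 2 * w * r ^+ 2.
  rewrite /w; field; rewrite gt_eqF //.
have -> : 2 * eps * s * (s * eps / 2) = s ^+ 2 * eps ^+ 2 by field.
have B' : 2 * eps * s * (Fr x - Fr c - dotp (f' c) (x - c)) <= 2 * eps * s * (2 * Mf * r + Lf * r ^+ 2 / 2).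
  by rewrite ler_pM2l.
have E5 : 2 * eps * s * (2 * Mf * r + Lf * r ^+ 2 / 2) = 4 * Mf * r * eps * s + Lf * r ^+ 2 * eps * s.
  by field.
rewrite E5 in B'.
nra.
Qed.

Lemma php x : (-oo < phi_of f h x)%E.
Proof. rewrite /phi_of; move: (fp x) (hp x); case: (f x) => [a| |] //; case: (h x) => [b| |] //= _ _; rewrite ?ltNye // -EFinD ltNyr. Qed.

Lemma xs_D xs x0 : Xstar (phi_of f h) xs -> x0 \in D -> xs \in D.
Proof.
move=> Hs Hx0; have := Hs x0; rewrite (phiE Hx0) inD /phi_of.
have := fp xs; case: (h xs) => [b| |] //.
  by move=> _ _; rewrite ltry.
by case: (f xs) => [a| |].
Qed.

Lemma phistar_eq xs : Xstar (phi_of f h) xs -> phistar (phi_of f h) = phi_of f h xs.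
Proof.
move=> Hs; apply/le_anti/andP; split.
  by apply: ereal_inf_lbound; exists xs.
by apply: le_ereal_inf_tmp => _ [y _ <-]; exact: Hs.
Qed.

Lemma stopE x xs : x \in D -> xs \in D -> Xstar (phi_of f h) xs ->
  stop_test (phi_of f h) eps x <-> Phi x - Phi xs <= eps.
Proof.
move=> Hx Hs Hst; rewrite /stop_test (phistar_eq xs Hst) (phiE Hx) (phiE Hs) -EFinD lee_fin.
by [].
Qed.

Lemma acceptE lm c x : c \in D -> x \in D ->
  accept_test f f' chi eps lm c x <->
  Fr x - (Fr c + dotp (f' c) (x - c)) - (1 - chi) * enorm (x - c) ^+ 2 / (2 * lm) <= (1 - chi) * eps / 2.
Proof. by move=> Hc Hx; rewrite /accept_test /ell fE // fE // -EFinD lee_fin. Qed.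

Lemma step_a lm c x xs : 0 < lm -> c \in D -> is_argmin (subprob f h f' lm c) x ->
  accept_test f f' chi eps lm c x -> xs \in D -> Xstar (phi_of f h) xs ->
  ~ stop_test (phi_of f h) eps x ->
  lm * eps + (1 + lm * nu) * enorm (xs - x) ^+ 2 < enorm (xs - c) ^+ 2.
Proof.
move=> lm0 Hc Hm Hacc Hs Hst Hns.
have Hx := argmin_D Hc Hm.
have TP := three_point _ _ _ _ lm0 Hc Hm Hs.
have SG := sgr Hc Hs.
move/(acceptE lm c x Hc Hx): Hacc => AC.
have NS : eps < Phi x - Phi xs by rewrite ltNge; apply/negP => /(stopE x xs Hx Hs Hst).
case/andP: chi01 => c0 c1.
set K : R := (2 * lm)^-1 in TP.
set a := enorm (xs - c) ^+ 2 in TP *.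
set b := enorm (xs - x) ^+ 2 in TP *.
rewrite -/b in TP.
set r := enorm (x - c) ^+ 2 in TP AC.
have ar : (1 - chi) * r / (2 * lm) = (1 - chi) * (K * r) by rewrite /K; field; rewrite gt_eqF.
rewrite ar in AC.
rewrite /Sr -/K -/r -/a in TP.
have r0 : 0 <= r by exact: sqr_ge0.
have Kr0 : 0 <= chi * (K * r) by apply: mulr_ge0 => //; apply: mulr_ge0 => //; rewrite invr_ge0; lra.
have I : (1 + chi) * eps / 2 + (nu / 2 + K) * b + chi * (K * r) < K * a.
  rewrite /Phi in NS. lra.
have I2 : 2 * lm * ((1 + chi) * eps / 2 + (nu / 2 + K) * b + chi * (K * r)) < 2 * lm * (K * a).
  by rewrite ltr_pM2l //; lra.
have E1 : 2 * lm * ((1 + chi) * eps / 2 + (nu / 2 + K) * b + chi * (K * r)) =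
          lm * eps + lm * chi * eps + (1 + lm * nu) * b + chi * r.
  by rewrite /K; field; rewrite gt_eqF.
have E2 : 2 * lm * (K * a) = a by rewrite /K; field; rewrite gt_eqF.
rewrite E1 E2 in I2.
have : 0 <= lm * chi * eps by apply: mulr_ge0 => //; [apply: mulr_ge0 => //; exact: ltW | exact: ltW].
have : 0 <= chi * r by exact: mulr_ge0.
lra.
Qed.

Lemma step_b lm c x xs : 0 < lm -> 0 < chi -> c \in D -> is_argmin (subprob f h f' lm c) x ->
  accept_test f f' chi eps lm c x -> xs \in D -> Xstar (phi_of f h) xs ->
  ~ stop_test (phi_of f h) eps x ->
  lm * eps + (1 + lm * mu * chi) * enorm (xs - x) ^+ 2 < enorm (xs - c) ^+ 2.
Proof.
move=> lm0 chip Hc Hm Hacc Hs Hst Hns.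
have Hx := argmin_D Hc Hm.
move/(acceptE lm c x Hc Hx): Hacc => AC.
have NS : eps < Phi x - Phi xs by rewrite ltNge; apply/negP => /(stopE x xs Hx Hs Hst).
case/andP: chi01 => c0 c1.
set t := 1 - chi.
have ht : 0 < t < 1 by rewrite /t; apply/andP; split; lra.
have t0 : 0 < t by rewrite /t; lra.
have Hz := D_conv Hs Hx ht.
set z := t *: xs + (1 - t) *: x in Hz.
have TP := three_point _ _ _ _ lm0 Hc Hm Hz.
have SG := sgr Hc Hz.
have [_ SC] := sc_real (phi_of f h) mu xs x t php phsc ht
   ltac:(by rewrite (phiE Hs) ltry) ltac:(by rewrite (phiE Hx) ltry).
rewrite -/z (phiE Hs) (phiE Hx) (phiE Hz) /= in SC.
set a := enorm (xs - c) ^+ 2.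
set b := enorm (xs - x) ^+ 2 in SC *.
set r := enorm (x - c) ^+ 2 in AC.
have Ezx : enorm (z - x) ^+ 2 = t ^+ 2 * b.
  have -> : z - x = t *: (xs - x) by apply/rowP => i; rewrite !mxE /t; ring.
  by rewrite enormZ ger0_norm ?exprMn // ltW.
have Ezc : enorm (z - c) ^+ 2 = t * a + (1 - t) * r - t * (1 - t) * b.
  rewrite /z vec_comb sq_comb.
  have -> : (xs - c) - (x - c) = xs - x by apply/rowP=> i; rewrite !mxE; ring.
  by [].
rewrite /Sr Ezx Ezc in TP.
rewrite -subr_ge0 in TP; rewrite -subr_ge0 in SG; rewrite -subr_ge0 in SC;
rewrite -subr_ge0 in AC.
have d5 : 0 <= nu / 2 * t ^+ 2 * b.
  by apply: mulr_ge0; [apply: mulr_ge0; [apply: divr_ge0|exact: sqr_ge0]|exact: sqr_ge0].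
have S := addr_ge0 (addr_ge0 (addr_ge0 (addr_ge0 TP SG) SC) AC) d5.
set G := (2 * lm)^-1 * a + eps / 2 - (Phi x - Phi xs) - (2 * lm)^-1 * b - mu * chi * b / 2.
have G0 : 0 <= G.
  rewrite -(pmulr_rge0 _ t0).
  apply: le_trans S _; rewrite le_eqVlt; apply/orP; left; apply/eqP.
  by rewrite /G /Phi /t /r; field; rewrite gt_eqF.
have G2 : 0 <= 2 * lm * G by apply: mulr_ge0 => //; lra.
have E : 2 * lm * G = a + lm * eps - 2 * (lm * (Phi x - Phi xs)) - b - lm * mu * chi * b.
  by rewrite /G; field; rewrite gt_eqF.
have NS2 : lm * eps < lm * (Phi x - Phi xs) by rewrite ltr_pM2l.
rewrite E in G2.
lra.
Qed.

Lemma rhs_inf (a b : \bar R) (t : R) : 0 < t < 1 -> (-oo < a)%E -> (-oo < b)%E ->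
  a = +oo%E \/ b = +oo%E -> (t%:E * a + (1 - t)%:E * b = +oo)%E.
Proof.
move=> /andP[t0 t1] ha hb [->|->].
  rewrite gt0_muley ?lte_fin // addye //.
  by move: hb; case: b => [r| |] //= _; rewrite gt0_muley ?lte_fin ?subr_gt0.
rewrite (gt0_muley (x := (1 - t)%:E)) ?lte_fin ?subr_gt0 // addey //.
by move: ha; case: a => [r| |] //= _; rewrite gt0_muley ?lte_fin.
Qed.

Lemma phi_sc_nu : strongly_convex_mod (phi_of f h) nu.
Proof.
move=> x y t ht.
have Hm : forall w, (-oo < phi_of f h w - (nu / 2 * enorm w ^+ 2)%:E)%E.
  move=> w; move: (php w); case: (phi_of f h w) => [r| |] //= _; by rewrite -EFinB ltNyr.
have [Hx|Hx] := boolP (x \in D); last first.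
  rewrite rhs_inf // ?leey //; left.
  rewrite /phi_of; move: Hx; rewrite inD -leNgt leye_eq => /eqP ->.
  by rewrite addey ?gt_eqF ?fp.
have [Hy|Hy] := boolP (y \in D); last first.
  rewrite rhs_inf // ?leey //; right.
  rewrite /phi_of; move: Hy; rewrite inD -leNgt leye_eq => /eqP ->.
  by rewrite addey ?gt_eqF ?fp.
have Hz := D_conv Hx Hy ht.
rewrite (phiE Hx) (phiE Hy) (phiE Hz) -!EFinB -!EFinM -EFinD lee_fin.
have [_ H1] := sc_real h nu x y t hp hsc ht (set_mem Hx) (set_mem Hy).
have fx : (f x < +oo)%E by have := domhf _ (set_mem Hx).
have fy : (f y < +oo)%E by have := domhf _ (set_mem Hy).
have [_ H2] := sc_real f 0 x y t fp (@conv_sc0 _ _ f fc) ht fx fy.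
have E := sq_comb x y t.
rewrite -subr_ge0 in H1; rewrite -subr_ge0 in H2; rewrite -subr_ge0.
apply: le_trans (addr_ge0 H1 H2) _; rewrite le_eqVlt; apply/orP; left; apply/eqP.
by rewrite /Phi /Fr /Hr E; field.
Qed.

Variables (x0 : V) (lam0 : R) (lam : nat -> R) (ctr xq : nat -> V).
Hypothesis run : UCS_run f h f' x0 chi lam0 eps lam ctr xq.
Hypothesis lam00 : 0 < lam0.
Hypothesis x0D : x0 \in D.
Hypothesis numu : nu <= mu.

Let Q := Qe Mf Lf chi lam0 eps.

Lemma Q_facts : 0 < Q /\ eps / Q <= lam0 /\
  (forall lm, 0 < lm -> lm * Q <= 2 * eps ->
     lm * (8 * Mf ^+ 2 / (1 - chi) ^+ 2 + eps * (2 * Lf / (1 - chi) ^+ 2)) <= 2 * eps).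
Proof.
case/andP: chi01 => c0 c1.
have s0 : 0 < (1 - chi) ^+ 2 by apply: exprn_gt0; lra.
have t1 : 0 <= 8 * Mf ^+ 2 / (1 - chi) ^+ 2.
  by apply: divr_ge0; [apply: mulr_ge0 => //; exact: sqr_ge0 | exact: ltW].
have t2 : 0 <= 2 * Lf / (1 - chi) ^+ 2 by apply: divr_ge0; [apply: mulr_ge0 | exact: ltW].
have t3 : 0 < lam0^-1 by rewrite invr_gt0.
have t4 : 0 <= eps * (2 * Lf / (1 - chi) ^+ 2) by apply: mulr_ge0 => //; exact: ltW.
have t5 : 0 < eps * lam0^-1 by exact: mulr_gt0.
have EQ : Q = 8 * Mf ^+ 2 / (1 - chi) ^+ 2 + eps * (2 * Lf / (1 - chi) ^+ 2) + eps * lam0^-1.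
  by rewrite /Q /Qe; ring.
have Q0 : 0 < Q by rewrite EQ; lra.
split => //; split.
  rewrite ler_pdivrMr // EQ mulrDr (_ : lam0 * (eps * lam0^-1) = eps); last by field; rewrite gt_eqF.
  have : 0 <= lam0 * (8 * Mf ^+ 2 / (1 - chi) ^+ 2 + eps * (2 * Lf / (1 - chi) ^+ 2)).
    by apply: mulr_ge0; [exact: ltW| lra].
  lra.
move=> lm lm0 H; apply: le_trans H; rewrite ler_pM2l // EQ; lra.
Qed.

Definition Inv (j : nat) : Prop := exists A B : nat, [/\ (A + B = j)%N, lam j * 2 ^+ B = lam0,
  eps / Q <= lam j, ctr j \in D &
  forall xs, Xstar (phi_of f h) xs ->
    [/\ enorm (xs - ctr j) ^+ 2 + A%:R * (eps ^+ 2 / Q) <= enorm (xs - x0) ^+ 2,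
        (0 < mu -> (enorm (xs - ctr j) ^+ 2 + eps / mu) * (1 + eps * nu / Q) ^+ A
                     <= enorm (xs - x0) ^+ 2 + eps / mu) &
        (0 < mu -> 0 < chi -> (enorm (xs - ctr j) ^+ 2 + eps / (mu * chi)) *
             (1 + eps * (mu * chi) / Q) ^+ A <= enorm (xs - x0) ^+ 2 + eps / (mu * chi))]].

Lemma inv0 : Inv 0.
Proof.
case: run => L0 C0 _ _.
have [Q0 [eQ _]] := Q_facts.
exists 0%N, 0%N; split => //; rewrite ?L0 ?C0 ?expr0 ?mulr1 //.
move=> xs _; split; rewrite ?mul0r ?addr0 ?mulr1 //.
Qed.

Lemma invS j : Inv j -> ~ stop_test (phi_of f h) eps (xq j) -> Inv j.+1.
Proof.
move=> [A [B [AB LB eL Cj P]]] Hns.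
case: run => _ _ AM ST.
have [Q0 [eQ QQ]] := Q_facts.
have eQ0 : 0 < eps / Q by exact: divr_gt0.
have lj0 : 0 < lam j by exact: lt_le_trans eQ0 eL.
have [STa STr] := ST j Hns.
have Hx := argmin_D Cj (AM j).
case: (pselect (accept_test f f' chi eps (lam j) (ctr j) (xq j))) => Hacc.
  have [L1 C1] := STa Hacc.
  exists A.+1, B; split.
  - by rewrite addSn AB.
  - by rewrite L1.
  - by rewrite L1.
  - by rewrite C1.
  move=> xs Hst.
  have Hs := xs_D xs x0 Hst x0D.
  have [P1 P2 P3] := P xs Hst.
  have SA := step_a (lam j) (ctr j) (xq j) xs lj0 Cj (AM j) Hacc Hs Hst Hns.
  have ee : eps ^+ 2 / Q <= lam j * eps.
    have -> : eps ^+ 2 / Q = (eps / Q) * eps by field; rewrite gt_eqF.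
    by apply: ler_wpM2r => //; exact: ltW.
  rewrite C1; split.
  - apply: (pot1 SA _ ee P1).
    apply: mulr_ge0; [apply: mulr_ge0 => //; exact: ltW| exact: sqr_ge0].
  - move=> mp; apply: (pot2 SA (sqr_ge0 _) _ _ _ (P2 mp)).
    + apply: divr_ge0 => //; [apply: mulr_ge0 => //; exact: ltW| exact: ltW].
    + rewrite mulrAC; apply: ler_wpM2r => //.
    + have -> : eps / mu * (eps * nu / Q) = (eps ^+ 2 / Q) * (nu / mu).
        by field; rewrite !gt_eqF.
      apply: le_trans ee; rewrite -{2}(mulr1 (eps ^+ 2 / Q)); apply: ler_wpM2l; first by apply: divr_ge0; [exact: sqr_ge0 | exact: ltW].
      by rewrite ler_pdivrMr // mul1r.
  - move=> mp cp.
    have SB := step_b (lam j) (ctr j) (xq j) xs lj0 cp Cj (AM j) Hacc Hs Hst Hns.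
    rewrite -mulrA in SB.
    apply: (pot2 SB (sqr_ge0 _) _ _ _ (P3 mp cp)).
    + by apply: divr_ge0; [apply: mulr_ge0; [exact: ltW| apply: mulr_ge0; exact: ltW]| exact: ltW].
    + rewrite mulrAC; apply: ler_wpM2r => //; apply: mulr_ge0; exact: ltW.
    + have -> : eps / (mu * chi) * (eps * (mu * chi) / Q) = eps ^+ 2 / Q.
        by field; rewrite !gt_eqF //; apply: mulr_gt0.
      exact: ee.
have [L1 C1] := STr Hacc.
have big : 2 * eps < lam j * Q.
  rewrite ltNge; apply/negP => HH; apply: Hacc.
  apply: accept_ok => //; exact: QQ.
exists A, B.+1; split.
- by rewrite addnS AB.
- by rewrite L1 exprS -LB; field.
- rewrite L1 ler_pdivrMr // mulrAC ler_pdivlMr //; lra.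
- by rewrite C1.
by rewrite C1.
Qed.

Lemma inv_all j : (forall i, (i < j)%N -> ~ stop_test (phi_of f h) eps (xq i)) -> Inv j.
Proof.
elim: j => [_|j IH H]; first exact: inv0.
apply: invS; first by apply: IH => i Hi; apply: H; exact: ltnW.
exact: H.
Qed.

Hypothesis mu0 : 0 <= mu.

Lemma inf_sq (v : R) : 0 <= v -> Xstar (phi_of f h) !=set0 ->
  (forall xs, Xstar (phi_of f h) xs -> v <= enorm (xs - x0) ^+ 2) ->
  v <= dist0 (phi_of f h) x0 ^+ 2.
Proof.
move=> v0 [y Hy] H.
have s0 : 0 <= Num.sqrt v by exact: sqrtr_ge0.
have : Num.sqrt v <= dist0 (phi_of f h) x0.
  apply: lb_le_inf; first by exists (enorm (y - x0)), y.
  move=> _ [x Hx <-].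
  rewrite -(ger0_norm (enorm_ge0 (x - x0))) -sqrtr_sqr ler_sqrt ?sqr_ge0 //.
  exact: H.
move=> HH.
rewrite -(sqr_sqrtr v0); apply: lerXn2r => //; rewrite nnegrE //; exact: le_trans HH.
Qed.

Lemma d0_ge0 : Xstar (phi_of f h) !=set0 -> 0 <= dist0 (phi_of f h) x0.
Proof.
move=> [y Hy]; apply: lb_le_inf; first by exists (enorm (y - x0)), y.
by move=> _ [x Hx <-]; exact: enorm_ge0.
Qed.

Lemma bound_of_inv j : Inv j -> Xstar (phi_of f h) !=set0 ->
  ((j%:R)%:E <= ucs_bound mu nu Q (dist0 (phi_of f h) x0) chi lam0 eps)%E.
Proof.
move=> [A [B [AB LB eL Cj P]]] Hne.
have [Q0 [eQ QQ]] := Q_facts.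
rewrite -AB; apply: final_bound => //.
- exact: d0_ge0.
- apply: inf_sq => //.
    apply: mulr_ge0; first exact: ler0n.
    by apply: divr_ge0; [exact: sqr_ge0| exact: ltW].
  move=> xs Hst; have [P1 _ _] := P xs Hst.
  have := sqr_ge0 (enorm (xs - ctr j)); lra.
- move=> mp np.
  set q := eps * nu / Q; set K := eps / mu.
  have K0 : 0 < K by exact: divr_gt0.
  have : K * ((1 + q) ^+ A - 1) <= dist0 (phi_of f h) x0 ^+ 2.
    apply: inf_sq => //.
      apply: mulr_ge0; first exact: ltW.
      rewrite subr_ge0; apply: exprn_ege1.
      have : 0 <= q by apply: divr_ge0; [apply: mulr_ge0; exact: ltW| exact: ltW].
      lra.
    move=> xs Hst; have [_ P2 _] := P xs Hst.
    have := P2 mp.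
    have := sqr_ge0 (enorm (xs - ctr j)).
    have : 0 <= (1 + q) ^+ A.
      apply: exprn_ge0; have : 0 <= q by apply: divr_ge0; [apply: mulr_ge0; exact: ltW| exact: ltW].
      lra.
    move=> p0 b0 HP; rewrite -/q -/K in HP.
    have := mulr_ge0 b0 p0; lra.
  move=> HH.
  have E : 1 + mu * dist0 (phi_of f h) x0 ^+ 2 / eps = 1 + dist0 (phi_of f h) x0 ^+ 2 / K.
    by rewrite /K; field; rewrite !gt_eqF.
  rewrite E -subr_ge0.
  have -> : 1 + dist0 (phi_of f h) x0 ^+ 2 / K - (1 + q) ^+ A =
            (dist0 (phi_of f h) x0 ^+ 2 - K * ((1 + q) ^+ A - 1)) / K.
    by field; rewrite gt_eqF.
  by apply: divr_ge0; [rewrite subr_ge0| exact: ltW].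
- move=> mp cp.
  have mc : 0 < mu * chi by exact: mulr_gt0.
  set q := eps * (mu * chi) / Q; set K := eps / (mu * chi).
  have K0 : 0 < K by exact: divr_gt0.
  have q0 : 0 <= q by apply: divr_ge0; [apply: mulr_ge0; [exact: ltW| exact: ltW]| exact: ltW].
  have : K * ((1 + q) ^+ A - 1) <= dist0 (phi_of f h) x0 ^+ 2.
    apply: inf_sq => //.
      apply: mulr_ge0; first exact: ltW.
      rewrite subr_ge0; apply: exprn_ege1; lra.
    move=> xs Hst; have [_ _ P3] := P xs Hst.
    have := P3 mp cp.
    have := sqr_ge0 (enorm (xs - ctr j)).
    have : 0 <= (1 + q) ^+ A by apply: exprn_ge0; lra.
    move=> p0 b0 HP; rewrite -/q -/K in HP.
    have := mulr_ge0 b0 p0; lra.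
  move=> HH.
  have d00 := d0_ge0 Hne.
  have : 1 + dist0 (phi_of f h) x0 ^+ 2 / K <= 1 + mu * dist0 (phi_of f h) x0 ^+ 2 / eps.
    rewrite lerD2l /K.
    have -> : dist0 (phi_of f h) x0 ^+ 2 / (eps / (mu * chi)) =
              chi * (mu * dist0 (phi_of f h) x0 ^+ 2 / eps).
      by field; rewrite !gt_eqF.
    rewrite -{2}(mul1r (mu * _ / _)); apply: ler_wpM2r.
      by apply: divr_ge0; [apply: mulr_ge0; [exact: ltW| exact: sqr_ge0]| exact: ltW].
    by case/andP: chi01 => _ /ltW.
  apply: le_trans.
  rewrite -subr_ge0.
  have -> : 1 + dist0 (phi_of f h) x0 ^+ 2 / K - (1 + q) ^+ A =
            (dist0 (phi_of f h) x0 ^+ 2 - K * ((1 + q) ^+ A - 1)) / K.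
    by field; rewrite gt_eqF.
  by apply: divr_ge0; [rewrite subr_ge0| exact: ltW].
- rewrite -LB mulrC; apply: ler_wpM2r => //; exact: exprn_ge0.
Qed.

End Main.


Theorem theorem2p2 (R : realType) (n : nat)
  (f h : 'rV[R]_n -> \bar R) (f' : 'rV[R]_n -> 'rV[R]_n) (Mf Lf : R)
  (x0 : 'rV[R]_n) (chi lam0 eps mu nu : R)
  (lam : nat -> R) (ctr xs : nat -> 'rV[R]_n) :
  proper_fun f -> convex_fun f -> lsc_fun f ->
  proper_fun h -> convex_fun h -> lsc_fun h ->
  dom h `<=` dom f ->
  (forall x, x \in dom h -> is_subgrad f x (f' x)) ->
  0 <= Mf -> 0 <= Lf ->
  (forall x y, x \in dom h -> y \in dom h ->
     enorm (f' x - f' y) <= 2 * Mf + Lf * enorm (x - y)) ->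
  Xstar (phi_of f h) !=set0 ->
  x0 \in dom h -> 0 <= chi < 1 -> 0 < lam0 -> 0 < eps ->
  is_mu (phi_of f h) mu -> is_mu h nu ->
  UCS_run f h f' x0 chi lam0 eps lam ctr xs ->
  exists j : nat,
    ((j%:R)%:E <= ucs_bound mu nu (Qe Mf Lf chi lam0 eps)
                   (dist0 (phi_of f h) x0) chi lam0 eps)%E /\
    stop_test (phi_of f h) eps (xs j).
Proof.
move=> [fp _] fc _ [hp _] hc _ domhf sg Mf0 Lf0 lip Hne x0D chi01 lam00 eps0
  [mu0 [phsc mumax]] [nu0 [hsc _]] run.
have numu : nu <= mu by apply: mumax => //; exact: (phi_sc_nu f h nu fp hp fc hc hsc domhf).
have KEY : forall j, (forall i, (i < j)%N -> ~ stop_test (phi_of f h) eps (xs i)) ->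
    ((j%:R)%:E <= ucs_bound mu nu (Qe Mf Lf chi lam0 eps)
                   (dist0 (phi_of f h) x0) chi lam0 eps)%E.
  move=> j Hj.
  apply: (bound_of_inv f h Mf Lf chi eps nu nu0 mu chi01 eps0 Lf0 x0 lam0 lam ctr lam00 mu0 j _ Hne).
  exact: (inv_all f h f' Mf Lf chi eps nu fp hp hc hsc nu0 mu phsc chi01 eps0 domhf sg Lf0 lip
           x0 lam0 lam ctr xs run lam00 x0D numu j Hj).
case: (pselect (exists j, stop_test (phi_of f h) eps (xs j))) => [Hex|Hno].
  have Hex' : exists j, `[< stop_test (phi_of f h) eps (xs j) >] by
    case: Hex => j Hj; exists j; apply/asboolP.
  case: (ex_minnP Hex') => m /asboolP Hm Hmin.
  exists m; split => //.
  apply: KEY => i Hi Hs.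
  have := Hmin i (asboolT Hs); rewrite leqNgt Hi //.
exfalso.
set d0 := dist0 (phi_of f h) x0.
set Q := Qe Mf Lf chi lam0 eps.
set C := Num.ceil (2 * ln (lam0 * Q / eps)).
set M := d0 ^+ 2 * Q / eps ^+ 2 + C%:~R.
have UB : (ucs_bound mu nu Q d0 chi lam0 eps <= M%:E)%E.
  rewrite /ucs_bound /= /M (EFinD (d0 ^+ 2 * Q / eps ^+ 2)); apply: leeD => //.
  by case: eqP => _ //; rewrite ge_min lexx orbT.
have := KEY (Num.truncn M).+1 (fun i _ => fun Hs => Hno (ex_intro _ i Hs)).
move=> H; have := le_trans H UB; rewrite lee_fin leNgt.
by rewrite truncnS_gt.
Qed.
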